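(* Let $D\ge 1$, $\Omega=\{0,1,\dots,D-1\}$, and let $S_1,\dots,S_n\subseteq\Omega$ be nonempty sets. Let $\pi:\Omega\to\Omega$ be a permutation, applied to every set, and put $z_i=\min \pi(S_i)$ for $i=1,\dots,n$. Fix an integer $b\ge 1$ and let $e_{i,t}$ denote the $t$-th lowest bit of the binary representation of $z_i$. Then each of the following symmetric $n\times n$ matrices is positive (semi)definite, i.e. satisfies $\sum_{i,j}c_ic_jK_{ij}\ge 0$ for all $c\in\mathbb{R}^n$: (1) the resemblance matrix $\mathbf{R}$ with $R_{ij}=\frac{|S_i\cap S_j|}{|S_i\cup S_j|}$; (2) the minwise hashing matrix $\mathbf{M}$ with $M_{ij}=1\{z_i=z_j\}$; (3) the $b$-bit minwise hashing matrix $\mathbf{M}^{(b)}$ with $M^{(b)}_{ij}=\prod_{t=1}^b 1\{e_{i,t}=e_{j,t}\}$. Consequently, if $\pi_1,\dots,\pi_k$ are $k$ permutations (e.g. independent random permutations) and $\mathbf{M}^{(b)}_{(s)}$ denotes the $b$-bit minwise hashing matrix generated by $\pi_s$, then $\sum_{s=1}^k\mathbf{M}^{(b)}_{(s)}$ is also positive (semi)definite.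
   Context: Here ''positive definite'' is used in the sense of nonnegative definite: a symmetric matrix $\mathbf K$ with $\sum_{ij}c_ic_jK_{ij}\ge0$ for all real vectors $c$. $1\{\cdot\}$ denotes the indicator function. *)

(* Defs.v *)
From HB Require Import structures.
From mathcomp Require Import all_boot all_order all_algebra all_fingroup.
Set Implicit Arguments. Unset Strict Implicit. Unset Printing Implicit Defensive.
Import Order.TTheory GRing.Theory Num.Theory.
Local Open Scope ring_scope.

Definition psd (R : realFieldType) (n : nat) (K : 'M[R]_n) : Prop :=
  K^T = K /\ forall c : 'I_n -> R, 0 <= \sum_(i < n) \sum_(j < n) c i * c j * K i j.

(* minimum of a subset of Omega = {0,..,D-1}, as a natural number
   (equals the true minimum for nonempty sets; D for the empty set). *)
Definition setmin (D : nat) (A : {set 'I_D}) : nat :=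
  \big[minn/D]_(x in A) (x : nat).

Definition minhash (D : nat) (pi : {perm 'I_D}) (S : {set 'I_D}) : nat :=
  setmin (pi @: S).

Definition bit (t z : nat) : bool := odd (z %/ 2 ^ t).

Definition resemblance_mx (R : realFieldType) (D n : nat)
  (S : 'I_n -> {set 'I_D}) : 'M[R]_n :=
  \matrix_(i, j) ((#|S i :&: S j|)%:R / (#|S i :|: S j|)%:R).

Definition minhash_mx (R : realFieldType) (D n : nat)
  (pi : {perm 'I_D}) (S : 'I_n -> {set 'I_D}) : 'M[R]_n :=
  \matrix_(i, j) ((minhash pi (S i) == minhash pi (S j))%:R).

(* b-bit: prod_{t=1..b} 1{e_{i,t} = e_{j,t}}, bits indexed 0..b-1 here *)
Definition bbit_mx (R : realFieldType) (D n b : nat)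
  (pi : {perm 'I_D}) (S : 'I_n -> {set 'I_D}) : 'M[R]_n :=
  \matrix_(i, j) \prod_(t < b)
     ((bit t (minhash pi (S i)) == bit t (minhash pi (S j)))%:R).

(* Main.v *)
Require Import Defs.
From HB Require Import structures.
From mathcomp Require Import all_boot all_order all_algebra all_fingroup.
Import Order.TTheory GRing.Theory Num.Theory.
Set Implicit Arguments.
Lemma bigmin_le (I : eqType) D (s : seq I) (P : pred I) (F : I -> nat) y :
  y \in s -> P y -> \big[minn/D]_(x <- s | P x) F x <= F y.
Proof.
elim: s => // a s IH; rewrite inE big_cons => /orP [/eqP <-|ys] Py.
  by rewrite Py geq_minl.
case: ifP => _; last exact: IH.
by rewrite geq_min IH ?orbT.
Qed.

Lemma setmin_spec D (C : {set 'I_D}) x0 : x0 \in C ->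
  exists2 x : 'I_D, x \in C & (setmin C = x /\ forall y, y \in C -> x <= y).
Proof.
move=> Cx0; case: (arg_minnP (fun x : 'I_D => (x : nat)) Cx0) => x Cx hx.
exists x => //; split => //.
apply/eqP; rewrite eqn_leq; apply/andP; split.
  by apply: bigmin_le => //; rewrite mem_index_enum.
rewrite /setmin; apply: (big_ind (fun v => x <= v)) => //.
  exact: ltnW.
by move=> a b ha hb; rewrite leq_min ha hb.
Qed.

Lemma mh_spec D (pi : {perm 'I_D}) (A : {set 'I_D}) a0 : a0 \in A ->
  exists2 a, a \in A & (minhash pi A = pi a /\ forall y, y \in A -> pi a <= pi y).
Proof.
move=> Aa0; have := setmin_spec (imset_f pi Aa0).
case=> v /imsetP [a Aa ->] [e h]; exists a => //; split => // y Ay.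
by apply: h; apply: imset_f.
Qed.

Section Count.
Variables (D : nat) (A B : {set 'I_D}) (a0 b0 : 'I_D).
Hypotheses (Aa0 : a0 \in A) (Bb0 : b0 \in B).
Let U := A :|: B.
Let Ua0 : a0 \in U. Proof. by rewrite inE Aa0. Qed.

Definition Pm (pi : {perm 'I_D}) x := [forall y in U, pi x <= pi y].
Definition am (pi : {perm 'I_D}) := [arg min_(x < a0 in U) (pi x : nat)].

Lemma am_spec pi : am pi \in U /\ Pm pi (am pi).
Proof.
rewrite /am; case: (arg_minnP (fun x => (pi x : nat)) Ua0) => x Ux hx.
by split => //; apply/forall_inP.
Qed.

Lemma Pm_uniq pi x y : Pm pi x -> Pm pi y -> x \in U -> y \in U -> x = y.
Proof.
move=> /forall_inP hx /forall_inP hy Ux Uy.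
apply: (@perm_inj _ pi); apply: val_inj.
by apply/eqP; rewrite eqn_leq (hx y Uy) (hy x Ux).
Qed.

Lemma am_eq pi x : x \in U -> Pm pi x -> am pi = x.
Proof. by move=> Ux Px; case: (am_spec pi) => U1 P1; exact: (Pm_uniq pi P1 Px U1 Ux). Qed.

Lemma key pi : (minhash pi A == minhash pi B) = (am pi \in A :&: B).
Proof.
case: (mh_spec pi Aa0) => a Aa [ea ha]; case: (mh_spec pi Bb0) => b Bb [eb hb].
case: (am_spec pi) => Uam /forall_inP Pam.
rewrite ea eb; apply/idP/idP.
  move=> /eqP /val_inj /perm_inj eab; subst b.
  have -> : am pi = a.
    apply: am_eq; first by rewrite inE Aa.
    apply/forall_inP => y; rewrite inE => /orP [] ?; [exact: ha | exact: hb].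
  by rewrite inE Aa Bb.
rewrite inE => /andP [Ax Bx].
have e1 : (pi a : nat) = pi (am pi) by apply/eqP; rewrite eqn_leq ha // Pam // inE Aa.
have e2 : (pi b : nat) = pi (am pi) by apply/eqP; rewrite eqn_leq hb // Pam // inE Bb orbT.
by rewrite e1 e2.
Qed.

Definition Q x := [set pi : {perm 'I_D} | am pi == x].

Lemma Q_le x y : x \in U -> y \in U -> #|Q x| <= #|Q y|.
Proof.
move=> Ux Uy.
rewrite -(card_imset (Q x) (mulgI (tperm x y))).
apply: subset_leq_card; apply/subsetP => s /imsetP [pi].
rewrite inE => /eqP hpi ->; rewrite inE; apply/eqP; apply: am_eq => //.
case: (am_spec pi); rewrite hpi => _ /forall_inP Px.
apply/forall_inP => z Uz; rewrite !permM tpermR.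
apply: Px; case: tpermP => // _ _.
Qed.

Lemma Q_eq x : x \in U -> #|Q x| = #|Q a0|.
Proof. by move=> Ux; apply/eqP; rewrite eqn_leq !Q_le. Qed.

Definition cnt (C : {set 'I_D}) := \sum_(pi : {perm 'I_D}) (am pi \in C : nat).

Lemma cntE (C : {set 'I_D}) : C \subset U -> cnt C = #|C| * #|Q a0|.
Proof.
move=> /subsetP sCU.
have -> : cnt C = \sum_(x in C) #|Q x|.
  rewrite /cnt.
  have -> : \sum_(pi : {perm 'I_D}) (am pi \in C : nat)
        = \sum_(pi : {perm 'I_D}) \sum_(x in C) (am pi == x : nat).
    apply: eq_bigr => pi _; case: (boolP (am pi \in C)) => h.
      rewrite (bigD1 (am pi)) //= eqxx big1 // => x /andP [_ hx].
      by rewrite eq_sym (negbTE hx).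
    rewrite big1 // => x Cx; case: eqP => // e; by rewrite e Cx in h.
  rewrite exchange_big /=; apply: eq_bigr => x _.
  rewrite -sum1_card [RHS]big_mkcond /=; apply: eq_bigr => pi _.
  by rewrite inE; case: (am pi == x).
rewrite (eq_bigr (fun _ => #|Q a0|)); first by rewrite sum_nat_const.
by move=> x Cx; apply: Q_eq; apply: sCU.
Qed.

Lemma cntU : cnt U = D`!.
Proof.
rewrite /cnt -card_Sn -sum1_card; apply: eq_bigr => pi _.
by case: (am_spec pi) => ->.
Qed.

Lemma count_main :
  (\sum_(pi : {perm 'I_D}) (minhash pi A == minhash pi B : nat)) * #|A :|: B|
   = D`! * #|A :&: B|.
Proof.
have -> : \sum_(pi : {perm 'I_D}) (minhash pi A == minhash pi B : nat) = cnt (A :&: B).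
  by apply: eq_bigr => pi _; rewrite key.
rewrite -cntU !cntE //; last first.
  by apply/subsetP => x; rewrite !inE => /andP [->].
by rewrite /U [LHS]mulnC [RHS]mulnAC mulnA.
Qed.

End Count.
Local Open Scope ring_scope.
Lemma psd_gram (R : realFieldType) n (T : finType) (a : 'I_n -> T -> R) :
  psd (\matrix_(i, j) \sum_(v : T) a i v * a j v).
Proof.
split.
  by apply/matrixP=> i j; rewrite !mxE; apply: eq_bigr => v _; rewrite mulrC.
move=> c.
have -> : \sum_(i < n) \sum_(j < n) c i * c j * (\matrix_(i, j) \sum_(v : T) a i v * a j v) i j
   = \sum_(v : T) (\sum_(i < n) c i * a i v) ^+ 2.
  under eq_bigr => i _ do under eq_bigr => j _ do rewrite mxE big_distrr /=.
  under eq_bigr => i _ do rewrite exchange_big /=.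
  rewrite exchange_big /=; apply: eq_bigr => v _.
  idtac.
  rewrite expr2 big_distrl /=; apply: eq_bigr => i _.
  rewrite big_distrr /=; apply: eq_bigr => j _.
  by rewrite -!mulrA; congr (_ * _); rewrite mulrCA.
by apply: sumr_ge0 => v _; exact: sqr_ge0.
Qed.

Lemma psd_eq (R : realFieldType) n (T : finType) (f : 'I_n -> T) :
  psd (\matrix_(i, j) ((f i == f j)%:R : R)).
Proof.
have -> : (\matrix_(i, j) ((f i == f j)%:R : R)) =
   \matrix_(i, j) \sum_(v : T) (f i == v)%:R * (f j == v)%:R.
  apply/matrixP=> i j; rewrite !mxE (bigD1 (f i)) //= eqxx mul1r big1 ?addr0 1?eq_sym //.
  by move=> v /negbTE hv; rewrite eq_sym hv mul0r.
exact: psd_gram.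
Qed.

Lemma psd_add (R : realFieldType) n (A B : 'M[R]_n) : psd A -> psd B -> psd (A + B).
Proof.
move=> [hA pA] [hB pB]; split; first by rewrite linearD /= hA hB.
move=> c; have := addr_ge0 (pA c) (pB c); rewrite -big_split /=.
congr (_ <= _); apply: eq_bigr => i _; rewrite -big_split; apply: eq_bigr => j _.
by rewrite mxE mulrDr.
Qed.

Lemma psd0 (R : realFieldType) n : psd (0 : 'M[R]_n).
Proof.
split; first by rewrite trmx0.
by move=> c; apply: sumr_ge0 => i _; apply: sumr_ge0 => j _; rewrite mxE mulr0.
Qed.

Lemma psd_sum (R : realFieldType) n (I : finType) (F : I -> 'M[R]_n) :
  (forall s, psd (F s)) -> psd (\sum_(s : I) F s).
Proof.
move=> h; apply: (big_ind (@psd R n)); [exact: psd0| exact: psd_add|by []].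
Qed.

Lemma psd_scale (R : realFieldType) n (a : R) (A : 'M[R]_n) : 0 <= a -> psd A -> psd (a *: A).
Proof.
move=> ha [hA pA]; split; first by rewrite linearZ /= hA.
move=> c; have := mulr_ge0 ha (pA c); rewrite mulr_sumr.
congr (_ <= _); apply: eq_bigr => i _; rewrite mulr_sumr; apply: eq_bigr => j _.
by rewrite mxE mulrCA.
Qed.
Lemma setmin_le D (A : {set 'I_D}) : (setmin A <= D)%N.
Proof.
rewrite /setmin; apply: (big_ind (fun v => v <= D)%N) => //.
  by move=> x y hx _; rewrite geq_min hx.
by move=> i _; exact: ltnW.
Qed.

Lemma minhash_psd (R : realFieldType) D n (pi : {perm 'I_D}) (S : 'I_n -> {set 'I_D}) :
  psd (minhash_mx R pi S).
Proof.
pose f i : 'I_D.+1 := inord (minhash pi (S i)).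
have -> : minhash_mx R pi S = \matrix_(i, j) ((f i == f j)%:R : R).
  apply/matrixP=> i j; rewrite !mxE /f; congr (_%:R).
  by rewrite -(inj_eq val_inj) /= !inordK // ltnS setmin_le.
exact: psd_eq.
Qed.

Lemma bbit_psd (R : realFieldType) D n b (pi : {perm 'I_D}) (S : 'I_n -> {set 'I_D}) :
  psd (bbit_mx R b pi S).
Proof.
pose f i : {ffun 'I_b -> bool} := [ffun t : 'I_b => bit t (minhash pi (S i))].
have -> : bbit_mx R b pi S = \matrix_(i, j) ((f i == f j)%:R : R).
  apply/matrixP=> i j; rewrite !mxE.
  have [e|ne] := eqVneq (f i) (f j).
    rewrite big1 // => t _; have := congr1 (fun g : {ffun 'I_b -> bool} => g t) e; rewrite /f !ffunE => ->.
    by rewrite eqxx.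
  have /existsP [t ht] : [exists t : 'I_b, bit t (minhash pi (S i)) != bit t (minhash pi (S j))].
    apply: contraNT ne; rewrite negb_exists => /forallP h.
    by apply/eqP/ffunP => t; rewrite !ffunE; apply/eqP; have := h t; rewrite negbK.
  by rewrite (bigD1 t) //= (negbTE ht) mul0r.
exact: psd_eq.
Qed.
Theorem theorem2 (R : realFieldType) (D n b : nat) (S : 'I_n -> {set 'I_D}) :
  (0 < D)%N -> (0 < b)%N -> (forall i, S i != set0) ->
  [/\ psd (resemblance_mx R S),
      (forall pi : {perm 'I_D}, psd (minhash_mx R pi S)),
      (forall pi : {perm 'I_D}, psd (bbit_mx R b pi S)) &
      (forall (k : nat) (pis : 'I_k -> {perm 'I_D}),
          psd (\sum_(s < k) bbit_mx R b (pis s) S))].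
Proof.
move=> D0 b0 Sne; split.
- have -> : resemblance_mx R S =
     (D`!%:R)^-1 *: \sum_(pi : {perm 'I_D}) minhash_mx R pi S.
    apply/matrixP => i j; rewrite !mxE summxE.
    under eq_bigr => pi _ do rewrite mxE.
    rewrite -natr_sum.
    have /set0Pn [a0 Aa0] := Sne i; have /set0Pn [b1 Bb1] := Sne j.
    have h := count_main Aa0 Bb1.
    set c := (\sum_pi _)%N in h *.
    have u0 : (#|S i :|: S j|%:R : R) != 0.
      by rewrite pnatr_eq0 -lt0n; apply/card_gt0P; exists a0; rewrite inE Aa0.
    have f0 : (D`!%:R : R) != 0 by rewrite pnatr_eq0 -lt0n fact_gt0.
    have hR : (c%:R : R) = D`!%:R * #|S i :&: S j|%:R / #|S i :|: S j|%:R.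
      by rewrite -natrM -h natrM mulfK.
    by rewrite hR !mulrA mulVf // mul1r.
  apply: psd_scale; first by rewrite invr_ge0 ler0n.
  by apply: psd_sum => pi; exact: minhash_psd.
- by move=> pi; exact: minhash_psd.
- by move=> pi; exact: bbit_psd.
- by move=> k pis; apply: psd_sum => s; exact: bbit_psd.
Qed.
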